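(* Let $c\ge0$, $d\in\{0,1,2,\dots\}$, $\lambda>0$, $q=e^{-\lambda/N}$, $\mathsf{s}=e^{-\lambda}$, and fix integers $p\ge1$, $0\le i\le p$. Then as $N\to\infty$, $$\int_0^1 f_i^{(c,d)}(Nt)\,dt=\Big(\frac{N}{\lambda}\Big)^p\frac{1}{i!(p-i)!}\Big(\mathcal{A}_{i,0}+\big(\mathcal{A}^{(1)}_{i,1}+\mathcal{A}^{(2)}_{i,1}+\mathcal{A}^{(3)}_{i,1}\big)\frac{\lambda}{N}+O(N^{-2})\Big),$$ where $\mathcal{A}_{i,0}=\mathsf{s}^{c(p-i)}\int_0^1\mathsf{s}^{pt}(1-\mathsf{s}^t)^{p-i}(1-\mathsf{s}^{c+t})^i\,dt$, $\mathcal{A}^{(1)}_{i,1}=\mathsf{s}^{c(p-i+1)}\frac{i(2d-i+1)}{2}\int_0^1\mathsf{s}^{(p+1)t}(1-\mathsf{s}^t)^{p-i}(1-\mathsf{s}^{c+t})^{i-1}\,dt$, $\mathcal{A}^{(2)}_{i,1}=\mathsf{s}^{c(p-i)}\frac{(p-i)(p-i+1)}{2}\int_0^1\mathsf{s}^{(p+1)t}(1-\mathsf{s}^t)^{p-i-1}(1-\mathsf{s}^{c+t})^{i}\,dt$, $\mathcal{A}^{(3)}_{i,1}=\frac{4di+2i^2+p-4dp-2ip+p^2}{4}\mathcal{A}_{i,0}$.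
   Context: For real $x$ and integer $m\ge0$ define $\begin{bmatrix} x\\ m\end{bmatrix}_q=\prod_{k=1}^{m}\frac{1-q^{x-m+k}}{1-q^{k}}$ (the usual $q$-binomial when $x$ is an integer). For real $y\ge0$ define $f_i^{(c,d)}(y)=q^{(cN+d)(p-i)+py}\begin{bmatrix} cN+d+y\\ i\end{bmatrix}_q\begin{bmatrix} p-i+y\\ p-i\end{bmatrix}_q$. *)

(* Defs.v *)
From Stdlib Require Import Reals Lra Lia List.
From Coquelicot Require Import Coquelicot.
Open Scope R_scope.

Definition rpow (a x : R) : R := Rpower a x.

Definition qbinom (q x : R) (m : nat) : R :=
  fold_right Rmult 1
    (map (fun k : nat => (1 - rpow q (x - INR m + INR k)) / (1 - q ^ k))
         (seq 1 m)).

Definition f_cd (lam : R) (N : nat) (p i : nat) (c : R) (d : nat) (y : R) : R :=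
  let q := exp (- lam / INR N) in
  let cNd := c * INR N + INR d in
  rpow q (cNd * (INR p - INR i) + INR p * y)
  * qbinom q (cNd + y) i
  * qbinom q (INR p - INR i + y) (p - i).

(* Main.v *)
Require Import Defs.
From Stdlib Require Import Reals Factorial Lra Lia List.
From Coquelicot Require Import Coquelicot.
Open Scope R_scope.

Lemma Dn_exp : forall n x, Derive_n exp n x = exp x.
Proof.
  induction n; intros x; simpl; auto.
  rewrite (Derive_ext _ exp); [| intros; apply IHn].
  apply is_derive_unique. auto_derive; auto. ring.
Qed.

Lemma exDn_exp : forall n x, ex_derive_n exp n x.
Proof.
  destruct n; intros x; simpl; auto.
  apply (ex_derive_ext exp); [intros; symmetry; apply Dn_exp|].
  auto_derive; auto.
Qed.

Lemma Dn_expm : forall n x, Derive_n (fun z => exp (-z)) n x = (-1)^n * exp (-x).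
Proof.
  induction n; intros x; simpl; [ring|].
  rewrite (Derive_ext _ (fun z => (-1)^n * exp (-z))); [| intros; apply IHn].
  apply is_derive_unique. auto_derive; auto. ring.
Qed.

Lemma exDn_expm : forall n x, ex_derive_n (fun z => exp (-z)) n x.
Proof.
  destruct n; intros x; simpl; auto.
  apply (ex_derive_ext (fun z => (-1)^n * exp (-z))); [intros; symmetry; apply Dn_expm|].
  auto_derive; auto.
Qed.

Lemma L_exp_pos y : 0 < y <= 1 -> Rabs (exp y - 1 - y) <= 2 * y^2.
Proof.
  intros Hy.
  destruct (Taylor_Lagrange exp 1 0 y) as [z [Hz E]]; [lra| intros; apply exDn_exp|].
  rewrite E. cbn [sum_f_R0]. rewrite !Dn_exp. cbn [fact INR Nat.mul Nat.add pow].
  assert (exp z <= 3). { apply Rle_trans with (exp 1); [|apply exp_le_3].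
    apply Rlt_le, exp_increasing; lra. }
  assert (0 < exp z) by apply exp_pos.
  rewrite exp_0. rewrite Rabs_right; nra.
Qed.

Lemma L_expn1 x : 0 < x -> 0 <= exp (-x) - 1 + x <= x^2/2.
Proof.
  intros Hx.
  destruct (Taylor_Lagrange (fun z => exp (-z)) 1 0 x) as [z [Hz E]]; [lra| intros; apply exDn_expm|].
  rewrite E. cbn [sum_f_R0]. rewrite !Dn_expm. cbn [fact INR Nat.mul Nat.add pow].
  assert (exp (-z) <= 1). { rewrite <- exp_0. apply Rlt_le, exp_increasing; lra. }
  assert (0 < exp (-z)) by apply exp_pos.
  rewrite Ropp_0, exp_0. nra.
Qed.

Lemma L_expn2 x : 0 < x -> - (x^3/6) <= exp (-x) - 1 + x - x^2/2 <= 0.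
Proof.
  intros Hx.
  destruct (Taylor_Lagrange (fun z => exp (-z)) 2 0 x) as [z [Hz E]]; [lra| intros; apply exDn_expm|].
  rewrite E. cbn [sum_f_R0]. rewrite !Dn_expm. cbn [fact INR Nat.mul Nat.add pow].
  assert (exp (-z) <= 1). { rewrite <- exp_0. apply Rlt_le, exp_increasing; lra. }
  assert (0 < exp (-z)) by apply exp_pos.
  rewrite Ropp_0, exp_0. match goal with |- _ <= ?e <= _ => replace e with (-(x^3/6) * exp (-z)) by field end. assert (0 < x^3) by (apply pow_lt; lra). split; nra.
Qed.

Lemma L_e y : Rabs y <= 1 -> Rabs (exp (-y) - 1 + y) <= 2 * y^2.
Proof.
  intros Hy.
  destruct (Rtotal_order y 0) as [Hn|[H0|Hp]].
  - replace (exp (-y) - 1 + y) with (exp (-y) - 1 - (-y)) by ring.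
    replace (y^2) with ((-y)^2) by ring.
    apply L_exp_pos. rewrite Rabs_left in Hy; lra.
  - subst. rewrite Ropp_0, exp_0. replace (1 - 1 + 0) with 0 by ring. rewrite Rabs_R0. nra.
  - pose proof (L_expn1 y Hp). rewrite Rabs_right; nra.
Qed.

Lemma L_phi x : 0 < x <= 1 -> Rabs (x / (1 - exp (-x)) - 1 - x/2) <= x^2.
Proof.
  intros Hx.
  pose proof (L_expn1 x (proj1 Hx)) as H1.
  pose proof (L_expn2 x (proj1 Hx)) as H2.
  set (E := exp (-x)) in *.
  set (rho := E - 1 + x - x^2/2) in *.
  assert (HD : x/2 <= 1 - E) by nra.
  assert (Hv : (x / (1 - E) - 1 - x/2) * (1 - E) = rho * (1 + x/2) + x^3/4).
  { unfold rho. field. lra. }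
  set (v := x / (1 - E) - 1 - x/2) in *.
  apply Rabs_le. split; nra.
Qed.
Lemma c_mult (f g : R -> R) x : continuous f x -> continuous g x -> continuous (fun y => f y * g y) x.
Proof. intros; now apply (continuous_mult f g x). Qed.
Lemma c_plus (f g : R -> R) x : continuous f x -> continuous g x -> continuous (fun y => f y + g y) x.
Proof. intros; now apply (continuous_plus f g x). Qed.
Lemma c_minus (f g : R -> R) x : continuous f x -> continuous g x -> continuous (fun y => f y - g y) x.
Proof. intros; now apply (continuous_minus f g x). Qed.
Lemma c_opp (f : R -> R) x : continuous f x -> continuous (fun y => - f y) x.
Proof. intros; now apply (continuous_opp f x). Qed.
Lemma c_const (a : R) x : continuous (fun _ : R => a) x.
Proof. apply continuous_const. Qed.
Lemma c_id x : continuous (fun y : R => y) x.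
Proof. apply continuous_id. Qed.
Lemma c_exp (f : R -> R) x : continuous f x -> continuous (fun y => exp (f y)) x.
Proof. apply continuous_exp_comp. Qed.
Lemma c_pow (f : R -> R) n x : continuous f x -> continuous (fun y => f y ^ n) x.
Proof. intros H; induction n; simpl. apply c_const. now apply c_mult. Qed.
Lemma c_rpow a (f : R -> R) x : continuous f x -> continuous (fun y => rpow a (f y)) x.
Proof. intros H. unfold rpow, Rpower. apply c_exp, c_mult; auto using c_const. Qed.

Ltac cont1 := match goal with
 | |- continuous (fun _ => ?a) _ => apply (c_const a)
 | |- continuous (fun y => @?f y * @?g y) _ => apply (c_mult f g)
 | |- continuous (fun y => @?f y - @?g y) _ => apply (c_minus f g)
 | |- continuous (fun y => @?f y + @?g y) _ => apply (c_plus f g)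
 | |- continuous (fun y => - @?f y) _ => apply (c_opp f)
 | |- continuous (fun y => @?f y ^ ?n) _ => apply (c_pow f n)
 | |- continuous (fun y => exp (@?f y)) _ => apply (c_exp f)
 | |- continuous (fun y => rpow ?a (@?f y)) _ => apply (c_rpow a f)
 | |- continuous (fun y => y) _ => apply c_id
 | H : forall t, continuous ?g t |- continuous ?g _ => apply H
 end.
Ltac cont := repeat cont1.

Definition Exp (F : R -> R -> R) (u v : R -> R) : Prop :=
  exists h0 B C, 0 < h0 /\ h0 <= 1 /\ 0 <= B /\ 0 <= C /\
   (forall h t, 0 < h <= h0 -> continuous (F h) t) /\
   (forall t, continuous u t) /\ (forall t, continuous v t) /\
   (forall t, 0 <= t <= 1 -> Rabs (u t) <= B) /\ (forall t, 0 <= t <= 1 -> Rabs (v t) <= B) /\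
   (forall h t, 0 < h <= h0 -> 0 <= t <= 1 -> Rabs (F h t - u t - h * v t) <= C * h^2).

Lemma mkExp F u v h0 B C : 0 < h0 -> h0 <= 1 -> 0 <= B -> 0 <= C ->
   (forall h t, 0 < h <= h0 -> continuous (F h) t) ->
   (forall t, continuous u t) -> (forall t, continuous v t) ->
   (forall t, 0 <= t <= 1 -> Rabs (u t) <= B) -> (forall t, 0 <= t <= 1 -> Rabs (v t) <= B) ->
   (forall h t, 0 < h <= h0 -> 0 <= t <= 1 -> Rabs (F h t - u t - h * v t) <= C * h^2) ->
   Exp F u v.
Proof. intros. exists h0, B, C. tauto. Qed.

Lemma abs_mul_le a b A B : Rabs a <= A -> Rabs b <= B -> Rabs (a * b) <= A * B.
Proof. intros; rewrite Rabs_mult; apply Rmult_le_compat; auto using Rabs_pos. Qed.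

Lemma mul_bound u1 v1 w1 u2 v2 w2 h B1 B2 C1 C2 : 0 < h <= 1 -> 0<=B1 -> 0<=B2 -> 0<=C1 -> 0<=C2 ->
  Rabs u1 <= B1 -> Rabs v1 <= B1 -> Rabs u2 <= B2 -> Rabs v2 <= B2 ->
  Rabs w1 <= C1*h^2 -> Rabs w2 <= C2*h^2 ->
  Rabs ((u1 + h*v1 + w1) * (u2 + h*v2 + w2) - u1*u2 - h*(u1*v2 + v1*u2))
   <= (B1*B2 + 2*B1*C2 + 2*C1*B2 + C1*C2) * h^2.
Proof.
  intros Hh HB1 HB2 HC1 HC2 Hu1 Hv1 Hu2 Hv2 Hw1 Hw2.
  replace ((u1 + h*v1 + w1) * (u2 + h*v2 + w2) - u1*u2 - h*(u1*v2 + v1*u2))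
   with (h^2*(v1*v2) + (u1 + h*v1)*w2 + w1*(u2+h*v2) + w1*w2) by ring.
  assert (Hh2 : 0 < h^2) by (apply pow_lt; lra).
  assert (Hh21 : h^2 <= 1) by nra.
  assert (Ha : Rabs (u1 + h*v1) <= 2*B1).
  { eapply Rle_trans; [apply Rabs_triang|]. rewrite Rabs_mult, (Rabs_right h) by lra. nra. }
  assert (Hb : Rabs (u2 + h*v2) <= 2*B2).
  { eapply Rle_trans; [apply Rabs_triang|]. rewrite Rabs_mult, (Rabs_right h) by lra. nra. }
  pose proof (abs_mul_le _ _ _ _ Hv1 Hv2).
  pose proof (abs_mul_le _ _ _ _ Ha Hw2).
  pose proof (abs_mul_le _ _ _ _ Hw1 Hb).
  pose proof (abs_mul_le _ _ _ _ Hw1 Hw2).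
  assert (Rabs (h^2 * (v1*v2)) <= h^2 * (B1*B2)).
  { rewrite Rabs_mult, (Rabs_right (h^2)) by lra. apply Rmult_le_compat_l; lra. }
  assert (C1 * h^2 * (C2 * h^2) <= C1*C2*h^2).
  { replace (C1*h^2*(C2*h^2)) with ((C1*C2*h^2)*h^2) by ring. assert (0 <= C1*C2*h^2) by (apply Rmult_le_pos; nra). nra. }
  assert (T: forall a b c d, Rabs (a+b+c+d) <= Rabs a + Rabs b + Rabs c + Rabs d).
  { intros. eapply Rle_trans; [apply Rabs_triang|]. apply Rplus_le_compat_r.
    eapply Rle_trans; [apply Rabs_triang|]. apply Rplus_le_compat_r. apply Rabs_triang. }
  eapply Rle_trans; [apply T|]. lra.
Qed.

Lemma Exp_mul F1 u1 v1 F2 u2 v2 : Exp F1 u1 v1 -> Exp F2 u2 v2 ->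
  Exp (fun h t => F1 h t * F2 h t) (fun t => u1 t * u2 t) (fun t => u1 t * v2 t + v1 t * u2 t).
Proof.
  intros (h1 & B1 & C1 & Hh1 & Hh1' & HB1 & HC1 & Hc1 & Hu1 & Hv1 & Hb1 & Hb1' & He1)
         (h2 & B2 & C2 & Hh2 & Hh2' & HB2 & HC2 & Hc2 & Hu2 & Hv2 & Hb2 & Hb2' & He2).
  exists (Rmin h1 h2), (2*B1*B2), (B1*B2 + 2*B1*C2 + 2*C1*B2 + C1*C2).
  assert (Hm1 := Rmin_l h1 h2). assert (Hm2 := Rmin_r h1 h2).
  repeat split.
  - apply Rmin_glb_lt; auto.
  - lra.
  - nra.
  - nra.
  - intros h t Hh. apply c_mult; [apply Hc1|apply Hc2]; lra.
  - intros t. apply c_mult; auto.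
  - intros t. apply c_plus; apply c_mult; auto.
  - intros t Ht. pose proof (Hb1 t Ht) as H; pose proof (Hb1' t Ht) as H0; pose proof (Hb2 t Ht) as H1; pose proof (Hb2' t Ht) as H2. rewrite Rabs_mult.
    apply Rle_trans with (B1*B2); [apply Rmult_le_compat; auto using Rabs_pos| nra].
  - intros t Ht. pose proof (Hb1 t Ht) as H; pose proof (Hb1' t Ht) as H0; pose proof (Hb2 t Ht) as H1; pose proof (Hb2' t Ht) as H2.
    eapply Rle_trans; [apply Rabs_triang|].
    pose proof (abs_mul_le _ _ _ _ H H2). pose proof (abs_mul_le _ _ _ _ H0 H1). lra.
  - intros h t Hh Ht. pose proof (Hb1 t Ht) as H; pose proof (Hb1' t Ht) as H0; pose proof (Hb2 t Ht) as H1; pose proof (Hb2' t Ht) as H2.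
    assert (Hhh1 : 0 < h <= h1) by lra. assert (Hhh2 : 0 < h <= h2) by lra.
    pose proof (He1 h t Hhh1 Ht). pose proof (He2 h t Hhh2 Ht).
    replace (F1 h t * F2 h t) with ((u1 t + h * v1 t + (F1 h t - u1 t - h * v1 t)) *
      (u2 t + h * v2 t + (F2 h t - u2 t - h * v2 t))) by ring.
    apply mul_bound; auto; lra.
Qed.

Lemma Exp_ext F u v F' u' v' : Exp F u v -> (forall h t, 0 < h -> F h t = F' h t) ->
  (forall t, u t = u' t) -> (forall t, v t = v' t) -> Exp F' u' v'.
Proof.
  intros (h0 & B & C & H1 & H2 & H3 & H4 & Hc & Hu & Hv & Hb & Hb' & He) EF Eu Ev.
  exists h0, B, C. repeat split; auto.
  - intros h t Hh. apply (continuous_ext (F h)); [intros; apply EF; lra| apply Hc; auto].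
  - intros t. apply (continuous_ext u); auto.
  - intros t. apply (continuous_ext v); auto.
  - intros t Ht. rewrite <- Eu. apply Hb; auto.
  - intros t Ht. rewrite <- Ev. apply Hb'; auto.
  - intros h t Hh Ht. rewrite <- EF, <- Eu, <- Ev by lra. auto.
Qed.

Lemma Exp_const (phi : R -> R) a b h0 C : 0 < h0 -> 0 <= C ->
  (forall h, 0 < h <= h0 -> Rabs (phi h - a - h * b) <= C * h^2) ->
  Exp (fun h _ => phi h) (fun _ => a) (fun _ => b).
Proof.
  intros Hh HC He. exists (Rmin h0 1), (Rabs a + Rabs b), C.
  assert (Hm1 := Rmin_l h0 1). assert (Hm2 := Rmin_r h0 1).
  pose proof (Rabs_pos a). pose proof (Rabs_pos b).
  repeat split; try lra; try (apply Rmin_glb_lt; lra); try (intros; apply c_const); try (intros; lra).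
  intros h t Hh' Ht. apply He. lra.
Qed.

Lemma Exp_fun (g : R -> R) B : (forall t, continuous g t) -> (forall t, 0 <= t <= 1 -> Rabs (g t) <= B) ->
  Exp (fun _ t => g t) g (fun _ => 0).
Proof.
  intros Hc Hb.
  assert (0 <= B) by (eapply Rle_trans; [apply Rabs_pos| apply (Hb 0); lra]).
  apply (mkExp _ _ _ 1 B 0); try lra; auto.
  - intros; apply c_const.
  - rewrite Rabs_R0; auto.
  - intros. replace (g t - g t - h * 0) with 0 by ring. rewrite Rabs_R0. lra.
Qed.

Lemma Exp_g (g : R -> R) m : (forall t, continuous g t) -> (forall t, 0 <= t <= 1 -> Rabs (g t) <= 1) ->
  Exp (fun h t => 1 - g t * exp (- (h * m))) (fun t => 1 - g t) (fun t => m * g t).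
Proof.
  intros Hc Hb. pose proof (Rabs_pos m).
  assert (0 < / (Rabs m + 1)) by (apply Rinv_0_lt_compat; lra).
  assert (/ (Rabs m + 1) <= 1).
  { rewrite <- Rinv_1. apply Rinv_le_contravar; lra. }
  apply (mkExp _ _ _ (/ (Rabs m + 1)) (2 + Rabs m) (2 * m^2)); try lra.
  - nra.
  - intros h t _. cont.
  - intros; cont.
  - intros; cont.
  - intros t Ht. specialize (Hb t Ht). unfold Rminus. eapply Rle_trans; [apply Rabs_triang|].
    rewrite Rabs_Ropp, Rabs_R1. lra.
  - intros t Ht. specialize (Hb t Ht). rewrite Rabs_mult. nra.
  - intros h t Hh Ht. specialize (Hb t Ht).
    replace (1 - g t * exp (- (h * m)) - (1 - g t) - h * (m * g t))
      with (- g t * (exp (- (h*m)) - 1 + h*m)) by ring.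
    assert (Hhm : Rabs (h*m) <= 1).
    { rewrite Rabs_mult, (Rabs_right h) by lra.
      assert (h * (Rabs m + 1) <= 1).
      { replace 1 with (/ (Rabs m + 1) * (Rabs m + 1)) at 2 by (field; lra).
        apply Rmult_le_compat_r; lra. }
      nra. }
    pose proof (L_e (h*m) Hhm).
    rewrite Rabs_mult, Rabs_Ropp.
    replace (2 * m^2 * h^2) with (1 * (2 * (h*m)^2)) by ring.
    apply Rmult_le_compat; auto using Rabs_pos.
Qed.

Lemma exp_pow a k : exp a ^ k = exp (INR k * a).
Proof.
  induction k. simpl. rewrite Rmult_0_l, exp_0; auto.
  rewrite S_INR. simpl. rewrite IHk, <- exp_plus. f_equal. ring.
Qed.

Lemma Exp_phi k : (1 <= k)%nat ->
  Exp (fun h _ => INR k * h / (1 - exp (- h) ^ k)) (fun _ => 1) (fun _ => INR k / 2).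
Proof.
  intros Hk. assert (Hk' : 1 <= INR k) by (apply (le_INR 1); auto).
  apply Exp_const with (/ INR k) (INR k ^ 2).
  - apply Rinv_0_lt_compat; lra.
  - apply pow2_ge_0.
  - intros h Hh. rewrite exp_pow.
    replace (INR k * - h) with (- (INR k * h)) by ring.
    replace (h * (INR k / 2)) with (INR k * h / 2) by field.
    replace (INR k ^ 2 * h^2) with ((INR k * h)^2) by ring.
    apply L_phi. split; [nra|].
    replace 1 with (INR k * / INR k) by (field; lra).
    apply Rmult_le_compat_l; lra.
Qed.

Lemma exRc (f : R -> R) a b : (forall z, Rmin a b <= z <= Rmax a b -> continuous f z) -> ex_RInt f a b.
Proof. intros H. apply (ex_RInt_continuous (V := R_CompleteNormedModule)); auto. Qed.

Lemma Exp_int F u v : Exp F u v -> exists C h0, 0 < h0 /\ forall h, 0 < h <= h0 ->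
  Rabs (RInt (F h) 0 1 - RInt u 0 1 - h * RInt v 0 1) <= C * h^2.
Proof.
  intros (h0 & B & C & H1 & H2 & H3 & H4 & Hc & Hu & Hv & Hb & Hb' & He).
  exists C, h0. split; auto. intros h Hh.
  assert (eF : ex_RInt (F h) 0 1) by (apply exRc; intros; apply Hc; auto).
  assert (eu : ex_RInt u 0 1) by (apply exRc; intros; apply Hu).
  assert (ev : ex_RInt v 0 1) by (apply exRc; intros; apply Hv).
  assert (ew : ex_RInt (fun t => F h t - u t - h * v t) 0 1).
  { apply exRc; intros. apply c_minus; [apply c_minus|apply c_mult]; auto using c_const. }
  assert (E : RInt (fun t => F h t - u t - h * v t) 0 1 = RInt (F h) 0 1 - RInt u 0 1 - h * RInt v 0 1).
  { rewrite (RInt_minus (fun t => F h t - u t) (fun t => h * v t)).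
    - rewrite (RInt_minus (F h) u) by auto.
      replace (RInt (fun t => h * v t) 0 1) with (h * RInt v 0 1). reflexivity.
      symmetry. exact (RInt_scal v 0 1 h ev).
    - apply exRc; intros. apply c_minus; auto.
    - apply exRc; intros. apply c_mult; auto using c_const. }
  rewrite <- E. apply Rabs_le. split.
  - apply Rle_trans with (RInt (fun _ => - (C * h^2)) 0 1).
    + rewrite RInt_const. unfold scal; simpl; unfold mult; simpl. lra.
    + apply RInt_le; auto using ex_RInt_const; try lra.
      intros t Ht. specialize (He h t Hh ltac:(lra)).
      pose proof (Rle_abs (- (F h t - u t - h * v t))). rewrite Rabs_Ropp in H. lra.
  - apply Rle_trans with (RInt (fun _ => C * h^2) 0 1).
    + apply RInt_le; auto using ex_RInt_const; try lra.
      intros t Ht. specialize (He h t Hh ltac:(lra)).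
      pose proof (Rle_abs (F h t - u t - h * v t)). lra.
    + rewrite RInt_const. unfold scal; simpl; unfold mult; simpl. lra.
Qed.

Fixpoint prodn (A : nat -> R) (n : nat) : R :=
  match n with O => 1 | S m => prodn A m * A (S m) end.

Definition Fac (g : R -> R) (r : R) (k : nat) (h t : R) : R :=
  INR k * h / (1 - exp (- h) ^ k) * (1 - g t * exp (- (h * (r + INR k)))).

Lemma Exp_fac (g : R -> R) r k : (1 <= k)%nat -> (forall t, continuous g t) -> (forall t, 0 <= t <= 1 -> Rabs (g t) <= 1) ->
  Exp (fun h t => Fac g r k h t) (fun t => 1 - g t) (fun t => (r + INR k) * g t + INR k / 2 * (1 - g t)).
Proof.
  intros Hk Hc Hb.
  eapply Exp_ext; [apply Exp_mul; [apply (Exp_phi k Hk) | apply (Exp_g g (r + INR k) Hc Hb)] | | |].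
  - intros; unfold Fac; reflexivity.
  - intros; simpl; ring.
  - intros; simpl; ring.
Qed.

Ltac rring := field.

Lemma Exp_prod (g : R -> R) r n : (forall t, continuous g t) -> (forall t, 0 <= t <= 1 -> Rabs (g t) <= 1) ->
  Exp (fun h t => prodn (fun k => Fac g r k h t) n) (fun t => (1 - g t)^n)
    (fun t => (INR n * r + INR n * (INR n + 1) / 2) * g t * (1 - g t)^(n-1)
              + INR n * (INR n + 1) / 4 * (1 - g t)^n).
Proof.
  intros Hc Hb. induction n.
  - eapply Exp_ext; [apply (Exp_const (fun _ => 1) 1 0 1 0); try lra | | |].
    + intros. replace (1 - 1 - h * 0) with 0 by rring. rewrite Rabs_R0. lra.
    + intros; simpl; reflexivity.
    + intros; simpl; reflexivity.
    + intros; simpl; rring.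
  - eapply Exp_ext; [apply Exp_mul; [apply IHn | apply (Exp_fac g r (S n)); auto; lia] | | |].
    + intros; simpl; reflexivity.
    + intros; simpl; rring.
    + intros t. destruct n.
      * simpl. rring.
      * replace (S (S n) - 1)%nat with (S n) by lia. replace (S n - 1)%nat with n by lia.
        rewrite !S_INR. simpl. rring.
Qed.

Lemma rpow_e a y : rpow (exp a) y = exp (y * a).
Proof. unfold rpow, Rpower. rewrite ln_exp. reflexivity. Qed.

Lemma fr_mult a l : fold_right Rmult a l = fold_right Rmult 1 l * a.
Proof. induction l; simpl. ring. rewrite IHl. ring. Qed.

Lemma fr_prodn (A : nat -> R) n : fold_right Rmult 1 (map A (seq 1 n)) = prodn A n.
Proof.
  induction n. reflexivity.
  rewrite seq_S, map_app, fold_right_app. simpl. rewrite fr_mult, IHn.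
  replace (1 + n)%nat with (S n) by lia. ring.
Qed.

Lemma prodn_mul A B n : prodn A n * prodn B n = prodn (fun k => A k * B k) n.
Proof. induction n; simpl. ring. rewrite <- IHn. ring. Qed.

Lemma prodn_ext A B n : (forall k, A k = B k) -> prodn A n = prodn B n.
Proof. intros H; induction n; simpl; auto. rewrite IHn, H; auto. Qed.

Lemma prodn_fact h n : INR (fact n) * h ^ n = prodn (fun k => INR k * h) n.
Proof.
  induction n. simpl. ring.
  cbn [prodn]. rewrite <- IHn. rewrite fact_simpl, mult_INR. cbn [pow]. ring.
Qed.

Lemma exp_le1 x : x <= 0 -> 0 < exp x <= 1.
Proof.
  intros; split. apply exp_pos. rewrite <- exp_0.
  destruct (Req_dec x 0). subst; lra. apply Rlt_le, exp_increasing; lra.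
Qed.

Lemma Exp_expc a m : Exp (fun h _ => a * exp (- (h * m))) (fun _ => a) (fun _ => - (a * m)).
Proof.
  pose proof (Rabs_pos m). pose proof (Rabs_pos a).
  assert (0 < / (Rabs m + 1)) by (apply Rinv_0_lt_compat; lra).
  apply (Exp_const _ _ _ (/ (Rabs m + 1)) (Rabs a * (2 * m^2))); auto.
  - apply Rmult_le_pos; auto. nra.
  - intros h Hh.
    replace (a * exp (- (h * m)) - a - h * - (a * m)) with (a * (exp (- (h*m)) - 1 + h*m)) by ring.
    assert (Hhm : Rabs (h*m) <= 1).
    { rewrite Rabs_mult, (Rabs_right h) by lra.
      assert (h * (Rabs m + 1) <= 1).
      { replace 1 with (/ (Rabs m + 1) * (Rabs m + 1)) at 2 by (field; lra).
        apply Rmult_le_compat_r; lra. }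
      nra. }
    pose proof (L_e (h*m) Hhm).
    rewrite Rabs_mult.
    replace (Rabs a * (2 * m^2) * h^2) with (Rabs a * (2 * (h*m)^2)) by ring.
    apply Rmult_le_compat_l; auto.
Qed.

Definition FF (lam c : R) (d p i : nat) (h t : R) : R :=
  (rpow (exp (- lam)) (c * (INR p - INR i)) * exp (- (h * (INR d * (INR p - INR i)))))
  * rpow (exp (- lam)) (INR p * t)
  * prodn (fun k => Fac (fun t => rpow (exp (- lam)) (c + t)) (INR d - INR i) k h t) i
  * prodn (fun k => Fac (fun t => rpow (exp (- lam)) t) 0 k h t) (p - i).

Lemma fcd_eq lam c d p i N t : (1 <= N)%nat -> (i <= p)%nat ->
  INR (fact i) * INR (fact (p - i)) * (lam / INR N) ^ p * f_cd lam N p i c d (INR N * t)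
  = FF lam c d p i (lam / INR N) t.
Proof.
  intros HN Hi.
  assert (HN' : INR N <> 0) by (apply not_0_INR; lia).
  set (h := lam / INR N).
  unfold f_cd, qbinom, FF. cbv zeta. rewrite !fr_prodn.
  replace (- lam / INR N) with (- h) by (unfold h, Rdiv; ring).
  rewrite (minus_INR p i Hi).
  replace (h ^ p) with (h ^ i * h ^ (p - i)) by (rewrite <- pow_add; f_equal; lia).
  set (P1 := prodn _ i). set (P2 := prodn _ (p - i)).
  set (Q1 := prodn (fun k => Fac _ _ k h t) i). set (Q2 := prodn (fun k => Fac _ _ k h t) (p - i)).
  assert (E2 : INR (fact i) * h ^ i * P1 = Q1).
  { unfold P1, Q1. rewrite prodn_fact, prodn_mul. apply prodn_ext. intros k. unfold Fac.
    rewrite !rpow_e. rewrite <- exp_plus.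
    match goal with |- _ = _ * (1 - exp ?A) => replace A with
      ((c * INR N + INR d + INR N * t - INR i + INR k) * - h) by (unfold h; field; auto) end.
    unfold Rdiv; ring. }
  assert (E3 : INR (fact (p - i)) * h ^ (p - i) * P2 = Q2).
  { unfold P2, Q2. rewrite prodn_fact, prodn_mul. apply prodn_ext. intros k. unfold Fac.
    rewrite !rpow_e. rewrite <- exp_plus.
    match goal with |- _ = _ * (1 - exp ?A) => replace A with
      ((INR p - INR i + INR N * t - (INR p - INR i) + INR k) * - h) by (unfold h; field; auto) end.
    unfold Rdiv; ring. }
  rewrite <- E2, <- E3.
  rewrite !rpow_e.
  assert (ET : exp (((c * INR N + INR d) * (INR p - INR i) + INR p * (INR N * t)) * - h)
     = exp (c * (INR p - INR i) * - lam) * exp (- (h * (INR d * (INR p - INR i)))) * exp (INR p * t * - lam)).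
  { rewrite <- !exp_plus. f_equal. unfold h. field. auto. }
  rewrite ET. ring.
Qed.

Lemma rpow_s_bound lam y : 0 < lam -> 0 <= y -> Rabs (rpow (exp (- lam)) y) <= 1.
Proof.
  intros. rewrite rpow_e. destruct (exp_le1 (y * - lam)) as [H1 H2]; [nra|].
  rewrite Rabs_right; lra.
Qed.

Lemma rpow_plus a x y : rpow a (x + y) = rpow a x * rpow a y.
Proof. unfold rpow. apply Rpower_plus. Qed.

Theorem lemma2p8 (c lam : R) (d p i : nat) :
  0 <= c -> 0 < lam -> (1 <= p)%nat -> (i <= p)%nat ->
  let s := exp (- lam) in
  let A0 := rpow s (c * (INR p - INR i)) *
    RInt (fun t => rpow s (INR p * t) * (1 - rpow s t) ^ (p - i)
                   * (1 - rpow s (c + t)) ^ i) 0 1 in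
  let A1_1 := rpow s (c * (INR p - INR i + 1)) *
    (INR i * (2 * INR d - INR i + 1) / 2) *
    RInt (fun t => rpow s ((INR p + 1) * t) * (1 - rpow s t) ^ (p - i)
                   * (1 - rpow s (c + t)) ^ (i - 1)) 0 1 in
  let A1_2 := rpow s (c * (INR p - INR i)) *
    ((INR p - INR i) * (INR p - INR i + 1) / 2) *
    RInt (fun t => rpow s ((INR p + 1) * t) * (1 - rpow s t) ^ (p - i - 1)
                   * (1 - rpow s (c + t)) ^ i) 0 1 in
  let A1_3 := (4 * INR d * INR i + 2 * INR i ^ 2 + INR p - 4 * INR d * INR p
               - 2 * INR i * INR p + INR p ^ 2) / 4 * A0 in
  exists C : R, exists N0 : nat, forall N : nat, (N0 <= N)%nat ->
    Rabs (RInt (fun t => f_cd lam N p i c d (INR N * t)) 0 1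
          - (INR N / lam) ^ p / (INR (fact i) * INR (fact (p - i)))
            * (A0 + (A1_1 + A1_2 + A1_3) * (lam / INR N)))
    <= (INR N / lam) ^ p / (INR (fact i) * INR (fact (p - i))) * (C / INR N ^ 2).
Proof.
  intros Hc Hlam Hp Hi s A0 A1_1 A1_2 A1_3.
  pose (w0 := fun t => rpow s (INR p * t) * (1 - rpow s t) ^ (p - i) * (1 - rpow s (c + t)) ^ i).
  pose (w1 := fun t => rpow s ((INR p + 1) * t) * (1 - rpow s t) ^ (p - i) * (1 - rpow s (c + t)) ^ (i - 1)).
  pose (w2 := fun t => rpow s ((INR p + 1) * t) * (1 - rpow s t) ^ (p - i - 1) * (1 - rpow s (c + t)) ^ i).
  pose (c0 := rpow s (c * (INR p - INR i))).
  pose (K1 := rpow s (c * (INR p - INR i + 1)) * (INR i * (2 * INR d - INR i + 1) / 2)).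
  pose (K2 := c0 * ((INR p - INR i) * (INR p - INR i + 1) / 2)).
  pose (coef := (4 * INR d * INR i + 2 * INR i ^ 2 + INR p - 4 * INR d * INR p
               - 2 * INR i * INR p + INR p ^ 2) / 4).
  assert (Hcs : forall (f : R -> R) t, continuous f t -> continuous (fun t => rpow s (f t)) t).
  { intros. apply c_rpow; auto. }
  assert (HE : Exp (FF lam c d p i) (fun t => c0 * w0 t)
                 (fun t => K1 * w1 t + K2 * w2 t + coef * c0 * w0 t)).
  { eapply Exp_ext.
    - apply Exp_mul; [apply Exp_mul; [apply Exp_mul|]|].
      + apply (Exp_expc c0 (INR d * (INR p - INR i))).
      + apply (Exp_fun (fun t => rpow s (INR p * t)) 1).
        * intros; cont.
        * intros. apply rpow_s_bound; auto. apply Rmult_le_pos; [apply pos_INR|lra].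
      + apply (Exp_prod (fun t => rpow s (c + t)) (INR d - INR i) i).
        * intros; cont.
        * intros. apply rpow_s_bound; auto. lra.
      + apply (Exp_prod (fun t => rpow s t) 0 (p - i)).
        * intros; cont.
        * intros. apply rpow_s_bound; auto. lra.
    - intros h t _. unfold FF. reflexivity.
    - intros t. unfold w0. cbv beta. ring.
    - intros t. unfold K1, K2, coef, c0, w0, w1, w2. cbv beta.
      rewrite (minus_INR p i Hi).
      replace ((INR p + 1) * t) with (INR p * t + t) by ring.
      replace (c * (INR p - INR i + 1)) with (c * (INR p - INR i) + c) by ring.
      rewrite !rpow_plus. field. }
  assert (HE' := HE).
  destruct HE' as (h1 & B1 & C1 & Hh1 & Hh1' & HB1 & HC1 & Hcont & _).
  destruct (Exp_int _ _ _ HE) as (C0 & h0 & Hh0 & Hb).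
  assert (ew0 : ex_RInt w0 0 1) by (apply exRc; intros; unfold w0; cont).
  assert (ew1 : ex_RInt w1 0 1) by (apply exRc; intros; unfold w1; cont).
  assert (ew2 : ex_RInt w2 0 1) by (apply exRc; intros; unfold w2; cont).
  assert (EU : RInt (fun t => c0 * w0 t) 0 1 = A0).
  { exact (RInt_scal w0 0 1 c0 ew0). }
  assert (EV : RInt (fun t => K1 * w1 t + K2 * w2 t + coef * c0 * w0 t) 0 1 = A1_1 + A1_2 + A1_3).
  { assert (e1 : ex_RInt (fun t => K1 * w1 t) 0 1) by (apply exRc; intros; unfold w1; cont).
    assert (e2 : ex_RInt (fun t => K2 * w2 t) 0 1) by (apply exRc; intros; unfold w2; cont).
    assert (e3 : ex_RInt (fun t => coef * c0 * w0 t) 0 1) by (apply exRc; intros; unfold w0; cont).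
    assert (e12 : ex_RInt (fun t => K1 * w1 t + K2 * w2 t) 0 1) by (apply exRc; intros; unfold w1, w2; cont).
    transitivity (RInt (fun t => K1 * w1 t + K2 * w2 t) 0 1 + RInt (fun t => coef * c0 * w0 t) 0 1).
    { exact (RInt_plus _ _ 0 1 e12 e3). }
    transitivity (RInt (fun t => K1 * w1 t) 0 1 + RInt (fun t => K2 * w2 t) 0 1 + RInt (fun t => coef * c0 * w0 t) 0 1).
    { f_equal. exact (RInt_plus _ _ 0 1 e1 e2). }
    replace (RInt (fun t => K1 * w1 t) 0 1) with (K1 * RInt w1 0 1) by (symmetry; exact (RInt_scal w1 0 1 K1 ew1)).
    replace (RInt (fun t => K2 * w2 t) 0 1) with (K2 * RInt w2 0 1) by (symmetry; exact (RInt_scal w2 0 1 K2 ew2)).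
    replace (RInt (fun t => coef * c0 * w0 t) 0 1) with (coef * c0 * RInt w0 0 1) by (symmetry; exact (RInt_scal w0 0 1 (coef * c0) ew0)).
    unfold A1_1, A1_2, A1_3, A0, K1, K2, coef, c0, w0, w1, w2. match goal with |- ?a = ?b => change (@eq R a b) end. ring. }
  pose (hm := Rmin h0 h1).
  assert (Hhm : 0 < hm) by (apply Rmin_glb_lt; auto).
  destruct (INR_unbounded (lam / hm)) as [M HM].
  exists (C0 * lam ^ 2), (S M). intros N HN.
  assert (HN1 : (1 <= N)%nat) by lia.
  assert (HNr : INR M < INR N) by (apply lt_INR; lia).
  assert (HN0 : 0 < INR N) by (apply lt_0_INR; lia).
  set (h := lam / INR N).
  assert (Hh : 0 < h) by (unfold h; apply Rdiv_lt_0_compat; auto).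
  assert (Hhle : h <= hm).
  { unfold h. apply Rle_trans with (lam / (lam / hm)).
    - apply Rmult_le_compat_l; [lra|]. apply Rinv_le_contravar; [apply Rdiv_lt_0_compat; auto| lra].
    - right. field. lra. }
  assert (Hh0' : 0 < h <= h0) by (split; auto; apply Rle_trans with hm; auto; apply Rmin_l).
  assert (Hh1x : 0 < h <= h1) by (split; auto; apply Rle_trans with hm; auto; apply Rmin_r).
  set (K := INR (fact i) * INR (fact (p - i))).
  assert (HK : 0 < K) by (unfold K; apply Rmult_lt_0_compat; apply lt_0_INR, lt_O_fact).
  assert (HD : 0 < K * h ^ p) by (apply Rmult_lt_0_compat; auto; apply pow_lt; auto).
  assert (EI : RInt (fun t => f_cd lam N p i c d (INR N * t)) 0 1 = / (K * h ^ p) * RInt (FF lam c d p i h) 0 1).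
  { assert (eF : ex_RInt (FF lam c d p i h) 0 1) by (apply exRc; intros; apply Hcont; auto).
    transitivity (RInt (fun t => / (K * h ^ p) * FF lam c d p i h t) 0 1).
    2: exact (RInt_scal (FF lam c d p i h) 0 1 (/ (K * h ^ p)) eF).
    apply RInt_ext. intros t _.
    pose proof (fcd_eq lam c d p i N t HN1 Hi) as E. fold h in E. fold K in E.
    rewrite <- E. match goal with |- ?a = ?b => change (@eq R a b) end. field. split; [apply pow_nonzero|]; lra. }
  assert (Epre : (INR N / lam) ^ p / K = / (K * h ^ p)).
  { unfold h. rewrite <- Rpow_mult_distr_depr || idtac.
    replace (INR N / lam) with (/ (lam / INR N)) by (field; lra).
    rewrite pow_inv. field. split; [|lra]. apply pow_nonzero. apply Rgt_not_eq, Rdiv_lt_0_compat; auto. }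
  fold K. rewrite Epre, EI.
  specialize (Hb h Hh0'). rewrite EU, EV in Hb.
  replace (/ (K * h ^ p) * RInt (FF lam c d p i h) 0 1 - / (K * h ^ p) * (A0 + (A1_1 + A1_2 + A1_3) * h))
    with (/ (K * h ^ p) * (RInt (FF lam c d p i h) 0 1 - A0 - h * (A1_1 + A1_2 + A1_3))) by ring.
  rewrite Rabs_mult, (Rabs_right (/ (K * h ^ p))) by (apply Rle_ge, Rlt_le, Rinv_0_lt_compat; auto).
  apply Rmult_le_compat_l; [apply Rlt_le, Rinv_0_lt_compat; auto|].
  replace (C0 * lam ^ 2 / INR N ^ 2) with (C0 * h ^ 2) by (unfold h; field; lra).
  exact Hb.
Qed.
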